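(* Let $S=(-1,1)^2$ and let $W\ge1$ be an integer. For a polynomial $$u(\xi,\eta)=\sum_{i=0}^{W}\sum_{j=0}^{W}a_{i,j}L_i(\xi)L_j(\eta)$$ (real coefficients $a_{i,j}$, $L_i$ the Legendre polynomial of degree $i$), define the quadratic forms $$\mathcal{B}(u)=\|u\|_{H^4(S)}^2=\int_S\sum_{|\alpha|\le 4}|D^{\alpha}_{\xi,\eta}u|^2\,d\xi\,d\eta$$ and $$\mathcal{C}(u)=\int_S\left(u_{\xi\xi\xi\xi}^2+u_{\eta\eta\eta\eta}^2+u_{\xi\xi\xi}^2+u_{\eta\eta\eta}^2+u_{\xi\xi}^2+u_{\eta\eta}^2+u_{\xi}^2+u_{\eta}^2+u^2\right)d\xi\,d\eta.$$ Then $\mathcal{B}$ and $\mathcal{C}$ are spectrally equivalent: there is a constant $M>0$ independent of $W$ such that for every such polynomial $u$, $$\frac{1}{M}\,\mathcal{B}(u)\le \mathcal{C}(u)\le \mathcal{B}(u).$$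
   Context: Subscripts denote partial derivatives, e.g. $u_{\xi\eta\eta}=\partial^3u/\partial\xi\,\partial\eta^2$; $D^{\alpha}_{\xi,\eta}$ is the partial derivative with multi-index $\alpha=(\alpha_1,\alpha_2)$, $|\alpha|=\alpha_1+\alpha_2$. *)

(* Defs.v *)
From Stdlib Require Import Reals.
From Coquelicot Require Import Coquelicot.
Open Scope R_scope.

(* (L_n(x), L_{n+1}(x)) via Bonnet's recurrence
   (n+2) L_{n+2} = (2n+3) x L_{n+1} - (n+1) L_n, with L_0 = 1, L_1 = x. *)
Fixpoint legendre_pair (n : nat) (x : R) : R * R :=
  match n with
  | O => (1, x)
  | S m => let (p, q) := legendre_pair m x in
           (q, ((2 * INR m + 3) * x * q - (INR m + 1) * p) / (INR m + 2))
  end.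

Definition legendre (n : nat) (x : R) : R := fst (legendre_pair n x).

Definition upoly (W : nat) (a : nat -> nat -> R) (xi eta : R) : R :=
  sum_f_R0 (fun i => sum_f_R0 (fun j => a i j * legendre i xi * legendre j eta) W) W.

Definition pderiv (k l : nat) (u : R -> R -> R) (xi eta : R) : R :=
  Derive_n (fun s => Derive_n (fun t => u s t) l eta) k xi.

Definition intS (f : R -> R -> R) : R :=
  RInt (fun xi => RInt (fun eta => f xi eta) (-1) 1) (-1) 1.

Definition Bform (u : R -> R -> R) : R :=
  intS (fun xi eta =>
    sum_f_R0 (fun k => sum_f_R0 (fun l => (pderiv k l u xi eta) ^ 2) (4 - k)) 4).

Definition Cform (u : R -> R -> R) : R :=
  intS (fun xi eta =>
    (pderiv 4 0 u xi eta) ^ 2 + (pderiv 0 4 u xi eta) ^ 2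
  + (pderiv 3 0 u xi eta) ^ 2 + (pderiv 0 3 u xi eta) ^ 2
  + (pderiv 2 0 u xi eta) ^ 2 + (pderiv 0 2 u xi eta) ^ 2
  + (pderiv 1 0 u xi eta) ^ 2 + (pderiv 0 1 u xi eta) ^ 2
  + (pderiv 0 0 u xi eta) ^ 2).

(* Main.v *)
Require Import Defs.
From Stdlib Require Import Reals Lra Lia FunctionalExtensionality.
From Coquelicot Require Import Coquelicot.
Open Scope R_scope.

Lemma sum_ext (f g : nat -> R) N :
  (forall i, (i <= N)%nat -> f i = g i) -> sum_f_R0 f N = sum_f_R0 g N.
Proof.
  induction N; intros H; simpl. apply H; lia.
  rewrite IHN by (intros; apply H; lia). rewrite H by lia. reflexivity.
Qed.

Lemma sum_plus' (f g : nat -> R) N :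
  sum_f_R0 (fun i => f i + g i) N = sum_f_R0 f N + sum_f_R0 g N.
Proof. induction N; simpl; [|rewrite IHN]; ring. Qed.

Lemma sum_scal_l (c : R) (f : nat -> R) N :
  sum_f_R0 (fun i => c * f i) N = c * sum_f_R0 f N.
Proof. induction N; simpl; [|rewrite IHN]; ring. Qed.

Lemma sum_scal_r (c : R) (f : nat -> R) N :
  sum_f_R0 (fun i => f i * c) N = sum_f_R0 f N * c.
Proof. induction N; simpl; [|rewrite IHN]; ring. Qed.

Lemma sum_le' (f g : nat -> R) N :
  (forall i, (i <= N)%nat -> f i <= g i) -> sum_f_R0 f N <= sum_f_R0 g N.
Proof.
  induction N; intros H; simpl. apply H; lia.
  apply Rplus_le_compat. apply IHN; intros; apply H; lia. apply H; lia.
Qed.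

Lemma sum_nonneg (f : nat -> R) N :
  (forall i, (i <= N)%nat -> 0 <= f i) -> 0 <= sum_f_R0 f N.
Proof.
  induction N; intros H; simpl. apply H; lia.
  apply Rplus_le_le_0_compat. apply IHN; intros; apply H; lia. apply H; lia.
Qed.

Lemma sum_prod (f g : nat -> R) N M :
  sum_f_R0 f N * sum_f_R0 g M =
  sum_f_R0 (fun i => sum_f_R0 (fun j => f i * g j) M) N.
Proof.
  rewrite <- sum_scal_r. apply sum_ext; intros. rewrite <- sum_scal_l. reflexivity.
Qed.

Lemma sum_sq_bound (t : nat -> R) N :
  (sum_f_R0 t N) ^ 2 <= INR (S N) * sum_f_R0 (fun i => t i ^ 2) N.
Proof.
  induction N. simpl. lra.
  rewrite !S_INR. rewrite S_INR in IHN. cbn [sum_f_R0].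
  set (S0 := sum_f_R0 t N) in *. set (Q := sum_f_R0 (fun i => t i ^ 2) N) in *.
  set (x := t (S N)).
  assert (HN : 0 <= INR N) by apply pos_INR.
  assert (H2 : 2 * S0 * x <= S0 ^ 2 / (INR N + 1) + (INR N + 1) * x ^ 2).
  { assert (0 < INR N + 1) by lra.
    apply Rmult_le_reg_r with (INR N + 1); auto.
    field_simplify; [|lra].
    assert (0 <= (S0 - (INR N + 1) * x) ^ 2) by apply pow2_ge_0. nra. }
  assert (H3 : S0 ^ 2 / (INR N + 1) <= Q).
  { apply Rmult_le_reg_r with (INR N + 1); [lra|].
    unfold Rdiv. rewrite Rmult_assoc, Rinv_l by lra. lra. }
  replace ((S0 + x) ^ 2) with (S0^2 + 2*S0*x + x^2) by ring.
  replace ((INR N + 1 + 1) * (Q + x ^ 2)) with ((INR N+1)*Q + Q + (INR N + 1)*x^2 + x^2) by ring.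
  lra.
Qed.

Inductive Poly : (R -> R) -> Prop :=
| P_const c : Poly (fun _ => c)
| P_id : Poly (fun x => x)
| P_plus f g : Poly f -> Poly g -> Poly (fun x => f x + g x)
| P_mult f g : Poly f -> Poly g -> Poly (fun x => f x * g x)
| P_ext f g : Poly f -> (forall x, f x = g x) -> Poly g.

Lemma Poly_deriv f : Poly f -> exists g, Poly g /\ forall x, is_derive f x (g x).
Proof.
  induction 1.
  - exists (fun _ => 0). split. constructor. intros; apply (is_derive_const c x).
  - exists (fun _ => 1). split. constructor. intros; apply (is_derive_id x).
  - destruct IHPoly1 as [f' [Hf' Df]]. destruct IHPoly2 as [g' [Hg' Dg]].
    exists (fun x => f' x + g' x). split. now constructor.
    intros x. apply (is_derive_plus f g x); auto.
  - destruct IHPoly1 as [f' [Hf' Df]]. destruct IHPoly2 as [g' [Hg' Dg]].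
    exists (fun x => f' x * g x + f x * g' x). split.
    constructor; constructor; auto.
    intros x. apply (is_derive_mult f g x); auto. intros; apply Rmult_comm.
  - destruct IHPoly as [f' [Hf' Df]]. exists f'. split; auto.
    intros x. apply (is_derive_ext f g); auto.
Qed.

Lemma Poly_Derive_n f : Poly f -> forall k, Poly (Derive_n f k).
Proof.
  intros Hf k. induction k. simpl. auto.
  destruct (Poly_deriv _ IHk) as [g [Hg Dg]].
  apply P_ext with g; auto. intros x. simpl. symmetry. apply is_derive_unique. auto.
Qed.

Lemma Poly_Derive_n_derive f : Poly f -> forall k x,
  is_derive (Derive_n f k) x (Derive_n f (S k) x).
Proof.
  intros Hf k x. destruct (Poly_deriv _ (Poly_Derive_n f Hf k)) as [g [Hg Dg]].
  simpl. rewrite (is_derive_unique _ _ _ (Dg x)). auto.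
Qed.

Lemma Poly_ex_derive_n f : Poly f -> forall k x, ex_derive_n f k x.
Proof.
  intros Hf k x. destruct k. simpl. auto. simpl.
  eexists. apply Poly_Derive_n_derive. auto.
Qed.

Lemma Poly_cont f : Poly f -> forall x, continuous f x.
Proof.
  intros Hf x. destruct (Poly_deriv f Hf) as [g [_ Dg]].
  apply (ex_derive_continuous (K:=R_AbsRing) (V:=R_NormedModule)). eexists; eauto.
Qed.

Lemma Poly_sum (f : nat -> R -> R) N : (forall i, Poly (f i)) ->
  Poly (fun x => sum_f_R0 (fun i => f i x) N).
Proof.
  intros H. induction N; simpl. auto. constructor; auto.
Qed.

Lemma Poly_scal c f : Poly f -> Poly (fun x => c * f x).
Proof. intros; constructor; auto; constructor. Qed.

Lemma legendre_pair_poly n :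
  Poly (fun x => fst (legendre_pair n x)) /\ Poly (fun x => snd (legendre_pair n x)).
Proof.
  induction n; simpl. split. constructor. constructor.
  destruct IHn as [H1 H2]. split.
  - apply P_ext with (fun x => snd (legendre_pair n x)); auto.
    intros x. destruct (legendre_pair n x); reflexivity.
  - apply P_ext with (fun x => ((2 * INR n + 3) * x * snd (legendre_pair n x)
        + (- (INR n + 1)) * fst (legendre_pair n x)) * / (INR n + 2)).
    + apply P_mult; [|constructor].
      apply P_plus. apply P_mult; auto. apply P_mult; constructor.
      apply P_mult; [constructor|]. auto.
    + intros x. destruct (legendre_pair n x); simpl. unfold Rdiv. ring.
Qed.

Lemma legendre_poly n : Poly (legendre n).
Proof.
  apply P_ext with (fun x => fst (legendre_pair n x)).
  apply legendre_pair_poly. reflexivity.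
Qed.

Lemma Derive_n_sum (c : nat -> R) (g : nat -> R -> R) N k x :
  (forall i, Poly (g i)) ->
  Derive_n (fun t => sum_f_R0 (fun i => c i * g i t) N) k x =
  sum_f_R0 (fun i => c i * Derive_n (g i) k x) N.
Proof.
  intros Hg. induction N; simpl.
  - apply Derive_n_scal_l.
  - rewrite Derive_n_plus. rewrite IHN, Derive_n_scal_l. reflexivity.
    apply filter_forall. intros y m _. apply Poly_ex_derive_n.
    apply Poly_sum. intros i. apply Poly_scal. auto.
    apply filter_forall. intros y m _. apply Poly_ex_derive_n.
    apply Poly_scal. auto.
Qed.

Definition Psi (W : nat) (a : nat -> nat -> R) (i : nat) (t : R) : R :=
  sum_f_R0 (fun j => a i j * legendre j t) W.

Lemma Psi_poly W a i : Poly (Psi W a i).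
Proof.
  unfold Psi. apply Poly_sum. intros j. apply Poly_scal. apply legendre_poly.
Qed.

Lemma upoly_eq W a x y :
  upoly W a x y = sum_f_R0 (fun i => legendre i x * Psi W a i y) W.
Proof.
  unfold upoly, Psi. apply sum_ext. intros i _. rewrite <- sum_scal_l.
  apply sum_ext. intros; ring.
Qed.

Lemma pderiv_upoly W a k l x y :
  pderiv k l (upoly W a) x y =
  sum_f_R0 (fun i => Derive_n (legendre i) k x * Derive_n (Psi W a i) l y) W.
Proof.
  unfold pderiv.
  transitivity (Derive_n (fun s => sum_f_R0 (fun i => Derive_n (Psi W a i) l y * legendre i s) W) k x).
  - apply Derive_n_ext. intros s.
    rewrite (Derive_n_ext _ (fun t => sum_f_R0 (fun i => legendre i s * Psi W a i t) W)).
    2: intros; apply upoly_eq.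
    rewrite Derive_n_sum. apply sum_ext; intros; ring. intros; apply Psi_poly.
  - rewrite Derive_n_sum. apply sum_ext; intros; ring. intros; apply legendre_poly.
Qed.

Lemma RInt_plusR (f g : R -> R) a b : ex_RInt f a b -> ex_RInt g a b ->
  RInt (fun x => f x + g x) a b = RInt f a b + RInt g a b.
Proof. intros. apply (RInt_plus f g a b); auto. Qed.

Lemma ex_RInt_plusR (f g : R -> R) a b : ex_RInt f a b -> ex_RInt g a b ->
  ex_RInt (fun x => f x + g x) a b.
Proof. intros. apply (ex_RInt_plus f g a b); auto. Qed.

Lemma RInt_scalR (f : R -> R) c a b : ex_RInt f a b ->
  RInt (fun x => c * f x) a b = c * RInt f a b.
Proof. intros. apply (RInt_scal f a b c); auto. Qed.

Lemma ex_RInt_scalR (f : R -> R) c a b : ex_RInt f a b ->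
  ex_RInt (fun x => c * f x) a b.
Proof. intros. apply (ex_RInt_scal f a b c); auto. Qed.

Lemma ex_RInt_sumR (f : nat -> R -> R) N a b : (forall i, (i <= N)%nat -> ex_RInt (f i) a b) ->
  ex_RInt (fun x => sum_f_R0 (fun i => f i x) N) a b.
Proof.
  induction N; intros H; simpl. apply H; lia.
  apply ex_RInt_plusR. apply IHN; intros; apply H; lia. apply H; lia.
Qed.

Lemma RInt_sumR (f : nat -> R -> R) N a b : (forall i, (i <= N)%nat -> ex_RInt (f i) a b) ->
  RInt (fun x => sum_f_R0 (fun i => f i x) N) a b = sum_f_R0 (fun i => RInt (f i) a b) N.
Proof.
  induction N; intros H; simpl. reflexivity.
  rewrite RInt_plusR. rewrite IHN. reflexivity. intros; apply H; lia.
  apply ex_RInt_sumR; intros; apply H; lia. apply H; lia.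
Qed.

Lemma RInt_ChaslesR (f : R -> R) a b c : ex_RInt f a b -> ex_RInt f b c ->
  RInt f a b + RInt f b c = RInt f a c.
Proof. intros. apply (RInt_Chasles f a b c); auto. Qed.

Lemma cont_ex_RInt (f : R -> R) a b : (forall x, continuous f x) -> ex_RInt f a b.
Proof. intros H. apply (ex_RInt_continuous (V:=R_CompleteNormedModule)). intros; apply H. Qed.

Definition PC (h : R -> R) := exists g1 g2 g3 : R -> R,
  (forall x, continuous g1 x) /\ (forall x, continuous g2 x) /\ (forall x, continuous g3 x) /\
  (forall x, x < -1 -> h x = g1 x) /\ (forall x, -1 < x < 1 -> h x = g2 x) /\
  (forall x, 1 < x -> h x = g3 x).

Lemma PC_cont h : (forall x, continuous h x) -> PC h.
Proof. intros H. exists h, h, h. repeat split; auto. Qed.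

Lemma PC_plus f g : PC f -> PC g -> PC (fun x => f x + g x).
Proof.
  intros [f1 [f2 [f3 [c1 [c2 [c3 [e1 [e2 e3]]]]]]]] [g1 [g2 [g3 [d1 [d2 [d3 [k1 [k2 k3]]]]]]]].
  exists (fun x => f1 x + g1 x), (fun x => f2 x + g2 x), (fun x => f3 x + g3 x).
  repeat split; intros; try (apply (continuous_plus (V:=R_NormedModule)); auto).
  rewrite e1, k1; auto. rewrite e2, k2; auto. rewrite e3, k3; auto.
Qed.

Lemma PC_mult f g : PC f -> PC g -> PC (fun x => f x * g x).
Proof.
  intros [f1 [f2 [f3 [c1 [c2 [c3 [e1 [e2 e3]]]]]]]] [g1 [g2 [g3 [d1 [d2 [d3 [k1 [k2 k3]]]]]]]].
  exists (fun x => f1 x * g1 x), (fun x => f2 x * g2 x), (fun x => f3 x * g3 x).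
  repeat split; intros; try (apply (continuous_mult (K:=R_AbsRing)); auto).
  rewrite e1, k1; auto. rewrite e2, k2; auto. rewrite e3, k3; auto.
Qed.

Lemma PC_const c : PC (fun _ => c).
Proof. apply PC_cont. intros; apply continuous_const. Qed.

Lemma PC_scal c f : PC f -> PC (fun x => c * f x).
Proof. intros; apply PC_mult; auto; apply PC_const. Qed.

Lemma PC_sum (f : nat -> R -> R) N : (forall i, PC (f i)) -> PC (fun x => sum_f_R0 (fun i => f i x) N).
Proof. intros H; induction N; simpl; auto. apply PC_plus; auto. Qed.

Lemma PC_ext f g : PC f -> (forall x, f x = g x) -> PC g.
Proof.
  intros [f1 [f2 [f3 [c1 [c2 [c3 [e1 [e2 e3]]]]]]]] E.
  exists f1, f2, f3. repeat split; auto; intros; rewrite <- E; auto.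
Qed.

Lemma PC_ex_left h a b : PC h -> a <= b <= -1 -> ex_RInt h a b.
Proof.
  intros [f1 [f2 [f3 [c1 [c2 [c3 [e1 [e2 e3]]]]]]]] Hab.
  apply ex_RInt_ext with f1. rewrite Rmin_left, Rmax_right by lra. intros; rewrite e1; auto; lra.
  apply cont_ex_RInt; auto.
Qed.

Lemma PC_ex_mid h a b : PC h -> -1 <= a <= b /\ b <= 1 -> ex_RInt h a b.
Proof.
  intros [f1 [f2 [f3 [c1 [c2 [c3 [e1 [e2 e3]]]]]]]] Hab.
  apply ex_RInt_ext with f2. rewrite Rmin_left, Rmax_right by lra. intros; rewrite e2; auto; lra.
  apply cont_ex_RInt; auto.
Qed.

Lemma PC_ex_right h a b : PC h -> 1 <= a <= b -> ex_RInt h a b.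
Proof.
  intros [f1 [f2 [f3 [c1 [c2 [c3 [e1 [e2 e3]]]]]]]] Hab.
  apply ex_RInt_ext with f3. rewrite Rmin_left, Rmax_right by lra. intros; rewrite e3; auto; lra.
  apply cont_ex_RInt; auto.
Qed.

Lemma PC_ex_22 h : PC h -> ex_RInt h (-2) 2.
Proof.
  intros H. apply ex_RInt_Chasles with (-1). apply PC_ex_left; auto; lra.
  apply ex_RInt_Chasles with 1. apply PC_ex_mid; auto; lra. apply PC_ex_right; auto; lra.
Qed.

Lemma RInt_split h : PC h ->
  RInt h (-2) 2 = RInt h (-2) (-1) + RInt h (-1) 1 + RInt h 1 2.
Proof.
  intros H.
  assert (E1 := RInt_ChaslesR h (-2) (-1) 2).
  assert (E2 := RInt_ChaslesR h (-1) 1 2).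
  assert (X1 : ex_RInt h (-2) (-1)) by (apply PC_ex_left; auto; lra).
  assert (X2 : ex_RInt h (-1) 1) by (apply PC_ex_mid; auto; lra).
  assert (X3 : ex_RInt h 1 2) by (apply PC_ex_right; auto; lra).
  assert (X4 : ex_RInt h (-1) 2) by (apply ex_RInt_Chasles with 1; auto).
  specialize (E1 X1 X4). specialize (E2 X2 X3). lra.
Qed.

Definition box (a b : R) := (a = -1 /\ b = 1) \/ (a = -2 /\ b = 2).

Lemma PC_ex_box h a b : PC h -> box a b -> ex_RInt h a b.
Proof.
  intros H [[-> ->]|[-> ->]]. apply PC_ex_mid; auto; lra. apply PC_ex_22; auto.
Qed.

Lemma box_lt a b : box a b -> a < b.
Proof. intros [[-> ->]|[-> ->]]; lra. Qed.

Lemma RInt_ge0' (f : R -> R) a b : a <= b -> ex_RInt f a b ->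
  (forall x, a < x < b -> 0 <= f x) -> 0 <= RInt f a b.
Proof. intros. apply RInt_ge_0; auto. Qed.

Lemma RInt_le' (f g : R -> R) a b : a <= b -> ex_RInt f a b -> ex_RInt g a b ->
  (forall x, a < x < b -> f x <= g x) -> RInt f a b <= RInt g a b.
Proof. intros. apply RInt_le; auto. Qed.

Lemma RInt_ext' (f g : R -> R) a b : a <= b ->
  (forall x, a < x < b -> f x = g x) -> RInt f a b = RInt g a b.
Proof. intros. apply RInt_ext. rewrite Rmin_left, Rmax_right by lra. auto. Qed.

Lemma RInt_restrict h : PC h -> (forall x, -2 < x < 2 -> 0 <= h x) ->
  RInt h (-1) 1 <= RInt h (-2) 2.
Proof.
  intros H Hp. rewrite (RInt_split h H).
  assert (0 <= RInt h (-2) (-1)). apply RInt_ge0'. lra. apply PC_ex_left; auto; lra.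
    intros; apply Hp; lra.
  assert (0 <= RInt h 1 2). apply RInt_ge0'. lra. apply PC_ex_right; auto; lra.
    intros; apply Hp; lra.
  lra.
Qed.

Inductive Sep : (R -> R -> R) -> Prop :=
| S_base p q : PC p -> PC q -> Sep (fun x y => p x * q y)
| S_plus H1 H2 : Sep H1 -> Sep H2 -> Sep (fun x y => H1 x y + H2 x y)
| S_ext H1 H2 : Sep H1 -> (forall x y, H1 x y = H2 x y) -> Sep H2.

Lemma Sep_mult A B : Sep A -> Sep B -> Sep (fun x y => A x y * B x y).
Proof.
  intros SA. revert B. induction SA as [p q Pp Pq | A1 A2 S1 IH1 S2 IH2 | A1 A2 S1 IH1 E]; intros B SB.
  - induction SB as [p' q' Pp' Pq' | B1 B2 T1 IT1 T2 IT2 | B1 B2 T1 IT1 E'].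
    + apply S_ext with (fun x y => (p x * p' x) * (q y * q' y)).
      apply S_base; apply PC_mult; auto. intros; ring.
    + apply S_ext with (fun x y => p x * q y * B1 x y + p x * q y * B2 x y).
      constructor; auto. intros; ring.
    + apply S_ext with (fun x y => p x * q y * B1 x y); auto. intros; rewrite E'; auto.
  - apply S_ext with (fun x y => A1 x y * B x y + A2 x y * B x y).
    constructor; auto. intros; ring.
  - apply S_ext with (fun x y => A1 x y * B x y); auto. intros; rewrite E; auto.
Qed.

Lemma Sep_const c : Sep (fun _ _ => c).
Proof. apply S_ext with (fun x y => c * 1). apply S_base; apply PC_const. intros; ring. Qed.

Lemma Sep_scal c H : Sep H -> Sep (fun x y => c * H x y).
Proof. intros; apply Sep_mult; auto; apply Sep_const. Qed.

Lemma Sep_sum (H : nat -> R -> R -> R) N : (forall i, Sep (H i)) ->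
  Sep (fun x y => sum_f_R0 (fun i => H i x y) N).
Proof. intros Hs; induction N; simpl; auto. apply S_plus; auto. Qed.

Lemma Sep_pow2 H : Sep H -> Sep (fun x y => H x y ^ 2).
Proof. intros. apply S_ext with (fun x y => H x y * H x y). apply Sep_mult; auto. intros; ring. Qed.

Lemma Sep_inner H c d : Sep H -> box c d ->
  exists rho, PC rho /\ forall x, ex_RInt (H x) c d /\ RInt (H x) c d = rho x.
Proof.
  intros S Hb. induction S.
  - exists (fun x => p x * RInt q c d). split. apply PC_mult; auto; apply PC_const.
    intros x. split. apply ex_RInt_scalR. apply PC_ex_box; auto.
    apply RInt_scalR. apply PC_ex_box; auto.
  - destruct IHS1 as [r1 [P1 E1]]. destruct IHS2 as [r2 [P2 E2]].
    exists (fun x => r1 x + r2 x). split. apply PC_plus; auto.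
    intros x. destruct (E1 x) as [X1 R1]. destruct (E2 x) as [X2 R2]. split.
    apply ex_RInt_plusR; auto. rewrite RInt_plusR; auto. rewrite R1, R2; auto.
  - destruct IHS as [r1 [P1 E1]]. exists r1. split; auto.
    intros x. destruct (E1 x) as [X1 R1]. split.
    apply ex_RInt_ext with (H1 x); auto.
    rewrite <- R1. symmetry. apply RInt_ext. intros; auto.
Qed.

Definition I2 (a b c d : R) (H : R -> R -> R) : R :=
  RInt (fun x => RInt (fun y => H x y) c d) a b.

Lemma I2_ext a b c d H H' : (forall x y, H x y = H' x y) -> I2 a b c d H = I2 a b c d H'.
Proof.
  intros E. unfold I2. apply RInt_ext. intros. apply RInt_ext. intros; auto.
Qed.

Lemma I2_ext_open a b c d H H' : a <= b -> c <= d ->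
  (forall x y, a < x < b -> c < y < d -> H x y = H' x y) -> I2 a b c d H = I2 a b c d H'.
Proof.
  intros Hab Hcd E. unfold I2. apply RInt_ext'; auto. intros. apply RInt_ext'; auto.
Qed.

Lemma I2_ex a b c d H : Sep H -> box a b -> box c d ->
  ex_RInt (fun x => RInt (fun y => H x y) c d) a b.
Proof.
  intros S Ha Hc. destruct (Sep_inner H c d S Hc) as [r [P E]].
  apply ex_RInt_ext with r. intros; symmetry; apply E. apply PC_ex_box; auto.
Qed.

Lemma I2_plus a b c d H1 H2 : Sep H1 -> Sep H2 -> box a b -> box c d ->
  I2 a b c d (fun x y => H1 x y + H2 x y) = I2 a b c d H1 + I2 a b c d H2.
Proof.
  intros S1 S2 Ha Hc. unfold I2. rewrite <- RInt_plusR by (apply I2_ex; auto).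
  apply RInt_ext. intros x _.
  destruct (Sep_inner H1 c d S1 Hc) as [r1 [_ E1]]. destruct (Sep_inner H2 c d S2 Hc) as [r2 [_ E2]].
  apply RInt_plusR; [apply E1 | apply E2].
Qed.

Lemma I2_scal a b c d k H : Sep H -> box a b -> box c d ->
  I2 a b c d (fun x y => k * H x y) = k * I2 a b c d H.
Proof.
  intros S Ha Hc. unfold I2. rewrite <- RInt_scalR by (apply I2_ex; auto).
  apply RInt_ext. intros x _.
  destruct (Sep_inner H c d S Hc) as [r1 [_ E1]]. apply RInt_scalR. apply E1.
Qed.

Lemma I2_sum a b c d (H : nat -> R -> R -> R) N : (forall i, Sep (H i)) -> box a b -> box c d ->
  I2 a b c d (fun x y => sum_f_R0 (fun i => H i x y) N) = sum_f_R0 (fun i => I2 a b c d (H i)) N.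
Proof.
  intros S Ha Hc. induction N. reflexivity.
  simpl. rewrite I2_plus; auto. rewrite IHN. reflexivity. apply Sep_sum; auto.
Qed.

Lemma I2_base a b c d p q : PC p -> PC q -> box a b -> box c d ->
  I2 a b c d (fun x y => p x * q y) = RInt p a b * RInt q c d.
Proof.
  intros Pp Pq Ha Hc. unfold I2.
  rewrite (RInt_ext _ (fun x => RInt q c d * p x)).
  rewrite RInt_scalR. ring. apply PC_ex_box; auto.
  intros. rewrite RInt_scalR. apply Rmult_comm. apply PC_ex_box; auto.
Qed.

Lemma I2_nonneg a b c d H : Sep H -> box a b -> box c d ->
  (forall x y, a < x < b -> c < y < d -> 0 <= H x y) -> 0 <= I2 a b c d H.
Proof.
  intros S Ha Hc Hp. unfold I2. apply RInt_ge0'. apply Rlt_le, box_lt; auto.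
  apply I2_ex; auto. intros x Hx.
  destruct (Sep_inner H c d S Hc) as [r [_ E]]. apply RInt_ge0'. apply Rlt_le, box_lt; auto.
  apply E. intros; apply Hp; auto.
Qed.

Lemma I2_le a b c d H1 H2 : Sep H1 -> Sep H2 -> box a b -> box c d ->
  (forall x y, a < x < b -> c < y < d -> H1 x y <= H2 x y) -> I2 a b c d H1 <= I2 a b c d H2.
Proof.
  intros S1 S2 Ha Hc Hle.
  assert (0 <= I2 a b c d (fun x y => H2 x y + (-1) * H1 x y)).
  { apply I2_nonneg; auto. apply S_plus; auto. apply Sep_scal; auto.
    intros; specialize (Hle x y H H0); lra. }
  rewrite I2_plus in H; auto. rewrite I2_scal in H; auto. lra. apply Sep_scal; auto.
Qed.

Lemma I2_amgm a b c d F G : Sep F -> Sep G -> box a b -> box c d ->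
  2 * Rabs (I2 a b c d (fun x y => F x y * G x y)) <=
  I2 a b c d (fun x y => F x y ^ 2) + I2 a b c d (fun x y => G x y ^ 2).
Proof.
  intros SF SG Ha Hc.
  assert (SFG : Sep (fun x y => F x y * G x y)) by (apply Sep_mult; auto).
  assert (H1 : 0 <= I2 a b c d (fun x y => F x y ^ 2 + ((-2) * (F x y * G x y) + G x y ^ 2))).
  { apply I2_nonneg; auto. apply S_plus. apply Sep_pow2; auto. apply S_plus.
    apply Sep_scal; auto. apply Sep_pow2; auto.
    intros. replace (F x y ^ 2 + (-2 * (F x y * G x y) + G x y ^ 2)) with ((F x y - G x y)^2) by ring.
    apply pow2_ge_0. }
  assert (H2 : 0 <= I2 a b c d (fun x y => F x y ^ 2 + (2 * (F x y * G x y) + G x y ^ 2))).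
  { apply I2_nonneg; auto. apply S_plus. apply Sep_pow2; auto. apply S_plus.
    apply Sep_scal; auto. apply Sep_pow2; auto.
    intros. replace (F x y ^ 2 + (2 * (F x y * G x y) + G x y ^ 2)) with ((F x y + G x y)^2) by ring.
    apply pow2_ge_0. }
  rewrite !I2_plus, !I2_scal in H1, H2; auto;
    try (apply Sep_pow2; auto); try (apply S_plus; auto); try (apply Sep_scal; auto);
    try (apply Sep_pow2; auto).
  unfold Rabs; destruct Rcase_abs; lra.
Qed.

Lemma Sep_PC_y H : Sep H -> forall x, PC (H x).
Proof.
  induction 1; intros x.
  apply PC_scal; auto. apply PC_plus; auto. apply PC_ext with (H1 x); auto.
Qed.

Lemma I2_restrict H : Sep H -> (forall x y, 0 <= H x y) ->
  I2 (-1) 1 (-1) 1 H <= I2 (-2) 2 (-2) 2 H.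
Proof.
  intros S Hp.
  assert (B1 : box (-1) 1) by (left; split; reflexivity).
  assert (B2 : box (-2) 2) by (right; split; reflexivity).
  destruct (Sep_inner H (-1) 1 S B1) as [r1 [P1 E1]].
  destruct (Sep_inner H (-2) 2 S B2) as [r2 [P2 E2]].
  unfold I2. apply Rle_trans with (RInt r2 (-1) 1).
  - apply RInt_le'. lra. apply ex_RInt_ext with r1. intros; symmetry; apply E1.
    apply PC_ex_box; auto. apply PC_ex_box; auto.
    intros x _. rewrite <- (proj2 (E2 x)).
    apply (RInt_restrict (H x)). apply Sep_PC_y; auto. intros; auto.
  - rewrite (RInt_ext (fun x => RInt (fun y => H x y) (-2) 2) r2 (-2) 2). apply RInt_restrict; auto.
    intros x _. rewrite <- (proj2 (E2 x)). apply RInt_ge0'. lra. apply E2. intros; auto.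
    intros; apply E2.
Qed.

Definition psi (m : nat) (t : R) : R :=
  match m with
  | 0 => 1 - 35*t^4 + 84*t^5 - 70*t^6 + 20*t^7
  | 1 => -140*t^3 + 420*t^4 - 420*t^5 + 140*t^6
  | 2 => -420*t^2 + 1680*t^3 - 2100*t^4 + 840*t^5
  | 3 => -840*t + 5040*t^2 - 8400*t^3 + 4200*t^4
  | 4 => -840 + 10080*t - 25200*t^2 + 16800*t^3
  | _ => 0 end.

Definition kR (m : nat) (x : R) : R := psi m (x - 1).
Definition kL (m : nat) (x : R) : R := (-1) ^ m * psi m (-1 - x).

Definition lam (j : nat) : R := INR (S j) / 2.
Definition cc (j : nat) : R :=
  match j with 0 => 20 | 1 => -45 | 2 => 36 | _ => -10 end.

Definition Phi (p : R) (F : nat -> R -> R) (m : nat) (x : R) : R :=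
  sum_f_R0 (fun j => cc j * (- lam j) ^ m * F m (p - lam j * (x - p))) 3.

Fixpoint bin (n m : nat) : nat :=
  match n, m with
  | _, O => 1
  | O, S _ => 0
  | S n', S m' => (bin n' m' + bin n' (S m'))%nat
  end.

Definition pj (k : nat) (P Q : nat -> R -> R) (x : R) : R :=
  sum_f_R0 (fun m => INR (bin k m) * P (k - m)%nat x * Q m x) k.

Definition Ext (k : nat) (F : nat -> R -> R) (x : R) : R :=
  if Rlt_dec x (-1) then pj k kL (Phi (-1) F) x
  else if Rle_dec x 1 then F k x else pj k kR (Phi 1 F) x.

Lemma Dreq (f : R -> R) (x l l' : R) : is_derive f x l -> l = l' -> is_derive f x l'.
Proof. intros H ->; auto. Qed.
Lemma Dplus (f g : R -> R) x a b : is_derive f x a -> is_derive g x b ->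
  is_derive (fun t => f t + g t) x (a + b).
Proof. intros. apply (is_derive_plus f g x a b); auto. Qed.
Lemma Dmult (f g : R -> R) x a b : is_derive f x a -> is_derive g x b ->
  is_derive (fun t => f t * g t) x (a * g x + f x * b).
Proof. intros. apply (is_derive_mult f g x a b); auto. intros; apply Rmult_comm. Qed.
Lemma Dconst (c x : R) : is_derive (fun _ => c) x 0.
Proof. apply (is_derive_const c x). Qed.

Lemma Dsum (f df : nat -> R -> R) N x : (forall i, (i <= N)%nat -> is_derive (f i) x (df i x)) ->
  is_derive (fun t => sum_f_R0 (fun i => f i t) N) x (sum_f_R0 (fun i => df i x) N).
Proof.
  induction N; intros H; simpl. apply H; lia.
  apply Dplus. apply IHN; intros; apply H; lia. apply H; lia.
Qed.

Lemma psi_deriv m t : (m <= 3)%nat -> is_derive (psi m) t (psi (S m) t).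
Proof.
  intros Hm. destruct m as [|[|[|[|m]]]]; try lia; unfold psi; auto_derive; auto; ring.
Qed.

Lemma psi_ex_derive m t : ex_derive (psi m) t.
Proof.
  destruct m as [|[|[|[|[|m]]]]]; unfold psi; auto_derive; auto.
Qed.

Lemma kR_deriv m x : (m <= 3)%nat -> is_derive (kR m) x (kR (S m) x).
Proof.
  intros Hm. unfold kR. eapply Dreq.
  apply (is_derive_comp (psi m) (fun x => x - 1)). apply psi_deriv; auto.
  auto_derive; auto. simpl. unfold scal; simpl; unfold mult; simpl. ring.
Qed.

Lemma kL_deriv m x : (m <= 3)%nat -> is_derive (kL m) x (kL (S m) x).
Proof.
  intros Hm. unfold kL. eapply Dreq. apply Dmult. apply Dconst.
  apply (is_derive_comp (psi m) (fun x => -1 - x)). apply psi_deriv; auto.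
  auto_derive; auto. simpl. unfold scal; simpl; unfold mult; simpl. ring.
Qed.

Lemma Phi_deriv p F m x : (forall y, is_derive (F m) y (F (S m) y)) ->
  is_derive (Phi p F m) x (Phi p F (S m) x).
Proof.
  intros HF. unfold Phi.
  apply (Dsum (fun j t => cc j * (-lam j)^m * F m (p - lam j * (t - p)))
              (fun j t => cc j * (-lam j)^(S m) * F (S m) (p - lam j * (t - p)))).
  intros i _.
  eapply Dreq. apply Dmult. apply Dconst.
  apply (is_derive_comp (F m) (fun x => p - lam i * (x - p))). apply HF.
  auto_derive; auto. simpl. unfold scal; simpl; unfold mult; simpl. ring.
Qed.

Ltac dtac P Q HP HQ :=
  repeat match goal with
  | |- is_derive (P _) _ _ => apply HP; lia
  | |- is_derive (Q _) _ _ => apply HQ; lia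
  | |- is_derive (fun _ => ?c) _ _ => apply Dconst
  | |- is_derive (fun t => _ + _) _ _ => apply Dplus
  | |- is_derive (fun t => _ * _) _ _ => apply Dmult
  end.

Lemma pj_deriv k P Q x : (k <= 3)%nat ->
  (forall m, (m <= 3)%nat -> is_derive (P m) x (P (S m) x)) ->
  (forall m, (m <= 3)%nat -> is_derive (Q m) x (Q (S m) x)) ->
  is_derive (pj k P Q) x (pj (S k) P Q x).
Proof.
  intros Hk HP HQ. unfold pj.
  destruct k as [|[|[|[|k]]]]; try lia; simpl;
  (eapply Dreq; [ dtac P Q HP HQ | cbv beta; ring ]).
Qed.

Lemma Phi_at p F m : (m <= 3)%nat -> Phi p F m p = F m p.
Proof.
  intros Hm. unfold Phi.
  rewrite (sum_ext _ (fun j => cc j * (-lam j)^m * F m p)).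
  2:{ intros; replace (p - lam i * (p - p)) with p by ring; reflexivity. }
  rewrite sum_scal_r.
  replace (sum_f_R0 (fun j => cc j * (- lam j) ^ m) 3) with 1. ring.
  destruct m as [|[|[|[|]]]]; try lia; unfold lam, cc; simpl; field.
Qed.

Lemma pj_R1 k Q : (k <= 3)%nat -> pj k kR Q 1 = Q k 1.
Proof.
  intros Hk. unfold pj, kR.
  replace (1 - 1) with 0 by ring.
  destruct k as [|[|[|[|]]]]; try lia; unfold psi; simpl; ring.
Qed.

Lemma pj_R2 k Q : (k <= 3)%nat -> pj k kR Q 2 = 0.
Proof.
  intros Hk. unfold pj, kR.
  replace (2 - 1) with 1 by ring.
  destruct k as [|[|[|[|]]]]; try lia; unfold psi; simpl; ring.
Qed.

Lemma pj_L1 k Q : (k <= 3)%nat -> pj k kL Q (-1) = Q k (-1).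
Proof.
  intros Hk. unfold pj, kL.
  replace (-1 - -1) with 0 by ring.
  destruct k as [|[|[|[|]]]]; try lia; unfold psi; simpl; ring.
Qed.

Lemma pj_L2 k Q : (k <= 3)%nat -> pj k kL Q (-2) = 0.
Proof.
  intros Hk. unfold pj, kL.
  replace (-1 - -2) with 1 by ring.
  destruct k as [|[|[|[|]]]]; try lia; unfold psi; simpl; ring.
Qed.

Lemma cont_plus (f g : R -> R) x : continuous f x -> continuous g x -> continuous (fun t => f t + g t) x.
Proof. intros. apply (continuous_plus (V:=R_NormedModule)); auto. Qed.
Lemma cont_mult (f g : R -> R) x : continuous f x -> continuous g x -> continuous (fun t => f t * g t) x.
Proof. intros. apply (continuous_mult (K:=R_AbsRing)); auto. Qed.
Lemma cont_const (c x : R) : continuous (fun _ : R => c) x.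
Proof. apply continuous_const. Qed.
Lemma cont_sum (f : nat -> R -> R) N x : (forall i, continuous (f i) x) ->
  continuous (fun t => sum_f_R0 (fun i => f i t) N) x.
Proof. intros H; induction N; simpl; auto. apply cont_plus; auto. Qed.
Lemma deriv_cont (f : R -> R) x l : is_derive f x l -> continuous f x.
Proof. intros. apply (ex_derive_continuous (K:=R_AbsRing) (V:=R_NormedModule)). eexists; eauto. Qed.

Lemma kR_cont m x : continuous (kR m) x.
Proof.
  unfold kR. destruct (psi_ex_derive m (x-1)) as [l Hl].
  apply (deriv_cont _ _ (1 * l)).
  apply (is_derive_comp (psi m) (fun x => x - 1) x l 1); auto.
  eapply Dreq. apply Dplus. apply (is_derive_id x). apply Dconst. simpl. unfold one; simpl. ring.
Qed.

Lemma kL_cont m x : continuous (kL m) x.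
Proof.
  unfold kL. apply cont_mult. apply cont_const.
  destruct (psi_ex_derive m (-1-x)) as [l Hl].
  apply (deriv_cont _ _ ((-1) * l)).
  apply (is_derive_comp (psi m) (fun x => -1 - x) x l (-1)); auto.
  eapply Dreq. apply (Dplus (fun _ => -1) (fun x => - x)). apply Dconst.
  apply (is_derive_opp (fun x => x) x one). apply (is_derive_id x). unfold opp, one; simpl. ring.
Qed.

Definition GoodJ (F : nat -> R -> R) :=
  (forall m x, is_derive (F m) x (F (S m) x)) /\ (forall m x, continuous (F m) x).

Definition J (f : R -> R) : nat -> R -> R := fun m => Derive_n f m.

Lemma J_good f : Poly f -> GoodJ (J f).
Proof.
  intros Hf. split; intros. apply Poly_Derive_n_derive; auto.
  apply Poly_cont. apply Poly_Derive_n; auto.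
Qed.

Lemma Phi_cont p F m x : (forall y, continuous (F m) y) -> continuous (Phi p F m) x.
Proof.
  intros HF. unfold Phi.
  apply (cont_sum (fun j t => cc j * (- lam j) ^ m * F m (p - lam j * (t - p)))). intros i.
  apply cont_mult. apply cont_const.
  apply (continuous_comp (fun t => p - lam i * (t - p)) (F m)); auto.
  apply (deriv_cont _ _ (- lam i)). auto_derive; auto; ring.
Qed.

Lemma pj_cont k P Q x : (forall m, continuous (P m) x) -> (forall m, continuous (Q m) x) ->
  continuous (pj k P Q) x.
Proof.
  intros HP HQ. unfold pj.
  apply (cont_sum (fun m t => INR (bin k m) * P (k - m)%nat t * Q m t)). intros i.
  apply cont_mult; auto. apply cont_mult; auto. apply cont_const.
Qed.

Lemma uR_cont k F x : GoodJ F -> continuous (pj k kR (Phi 1 F)) x.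
Proof.
  intros [_ HF]. apply pj_cont. intros; apply kR_cont. intros; apply Phi_cont; auto.
Qed.
Lemma uL_cont k F x : GoodJ F -> continuous (pj k kL (Phi (-1) F)) x.
Proof.
  intros [_ HF]. apply pj_cont. intros; apply kL_cont. intros; apply Phi_cont; auto.
Qed.

Lemma uR_deriv k F x : GoodJ F -> (k <= 3)%nat ->
  is_derive (pj k kR (Phi 1 F)) x (pj (S k) kR (Phi 1 F) x).
Proof.
  intros [HD _] Hk. apply pj_deriv; auto. intros; apply kR_deriv; auto.
  intros; apply Phi_deriv; auto.
Qed.
Lemma uL_deriv k F x : GoodJ F -> (k <= 3)%nat ->
  is_derive (pj k kL (Phi (-1) F)) x (pj (S k) kL (Phi (-1) F) x).
Proof.
  intros [HD _] Hk. apply pj_deriv; auto. intros; apply kL_deriv; auto.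
  intros; apply Phi_deriv; auto.
Qed.

Lemma Ext_mid k F x : -1 <= x <= 1 -> Ext k F x = F k x.
Proof.
  intros H. unfold Ext. destruct (Rlt_dec x (-1)). lra. destruct (Rle_dec x 1); auto. lra.
Qed.
Lemma Ext_right k F x : 1 < x -> Ext k F x = pj k kR (Phi 1 F) x.
Proof.
  intros H. unfold Ext. destruct (Rlt_dec x (-1)). lra. destruct (Rle_dec x 1); auto. lra.
Qed.
Lemma Ext_left k F x : x < -1 -> Ext k F x = pj k kL (Phi (-1) F) x.
Proof. intros H. unfold Ext. destruct (Rlt_dec x (-1)); auto. lra. Qed.

Lemma PC_Ext k F : GoodJ F -> PC (Ext k F).
Proof.
  intros G. exists (pj k kL (Phi (-1) F)), (F k), (pj k kR (Phi 1 F)).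
  repeat split; intros.
  apply uL_cont; auto. apply (proj2 G). apply uR_cont; auto.
  apply Ext_left; auto. apply Ext_mid; lra. apply Ext_right; auto.
Qed.

Lemma ibp (u u' v v' : R -> R) a b : a <= b ->
  (forall x, is_derive u x (u' x)) -> (forall x, is_derive v x (v' x)) ->
  (forall x, continuous u' x) -> (forall x, continuous v' x) ->
  RInt (fun x => u' x * v x) a b + RInt (fun x => u x * v' x) a b = u b * v b - u a * v a.
Proof.
  intros Hab Du Dv Cu Cv.
  assert (Cu0 : forall x, continuous u x) by (intros; eapply deriv_cont; eauto).
  assert (Cv0 : forall x, continuous v x) by (intros; eapply deriv_cont; eauto).
  rewrite <- RInt_plusR.
  - apply is_RInt_unique.
    assert (H := is_RInt_derive (fun x => u x * v x) (fun x => u' x * v x + u x * v' x) a b).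
    apply H.
    + intros. apply Dmult; auto.
    + intros. apply cont_plus; apply cont_mult; auto.
  - apply cont_ex_RInt; intros; apply cont_mult; auto.
  - apply cont_ex_RInt; intros; apply cont_mult; auto.
Qed.

Lemma Ext_ibp F G m n : GoodJ F -> GoodJ G -> (m <= 3)%nat -> (n <= 3)%nat ->
  RInt (fun x => Ext (S m) F x * Ext n G x) (-2) 2 =
  - RInt (fun x => Ext m F x * Ext (S n) G x) (-2) 2.
Proof.
  intros GF GG Hm Hn.
  rewrite (RInt_split (fun x => Ext (S m) F x * Ext n G x)) by (apply PC_mult; apply PC_Ext; auto).
  rewrite (RInt_split (fun x => Ext m F x * Ext (S n) G x)) by (apply PC_mult; apply PC_Ext; auto).
  rewrite (RInt_ext' (fun x => Ext (S m) F x * Ext n G x)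
     (fun x => pj (S m) kL (Phi (-1) F) x * pj n kL (Phi (-1) G) x) (-2) (-1))
     by (lra || (intros; rewrite !Ext_left by lra; reflexivity)).
  rewrite (RInt_ext' (fun x => Ext m F x * Ext (S n) G x)
     (fun x => pj m kL (Phi (-1) F) x * pj (S n) kL (Phi (-1) G) x) (-2) (-1))
     by (lra || (intros; rewrite !Ext_left by lra; reflexivity)).
  rewrite (RInt_ext' (fun x => Ext (S m) F x * Ext n G x)
     (fun x => F (S m) x * G n x) (-1) 1)
     by (lra || (intros; rewrite !Ext_mid by lra; reflexivity)).
  rewrite (RInt_ext' (fun x => Ext m F x * Ext (S n) G x)
     (fun x => F m x * G (S n) x) (-1) 1)
     by (lra || (intros; rewrite !Ext_mid by lra; reflexivity)).
  rewrite (RInt_ext' (fun x => Ext (S m) F x * Ext n G x)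
     (fun x => pj (S m) kR (Phi 1 F) x * pj n kR (Phi 1 G) x) 1 2)
     by (lra || (intros; rewrite !Ext_right by lra; reflexivity)).
  rewrite (RInt_ext' (fun x => Ext m F x * Ext (S n) G x)
     (fun x => pj m kR (Phi 1 F) x * pj (S n) kR (Phi 1 G) x) 1 2)
     by (lra || (intros; rewrite !Ext_right by lra; reflexivity)).
  assert (HL := ibp (pj m kL (Phi (-1) F)) (pj (S m) kL (Phi (-1) F))
                    (pj n kL (Phi (-1) G)) (pj (S n) kL (Phi (-1) G)) (-2) (-1)).
  assert (HM := ibp (F m) (F (S m)) (G n) (G (S n)) (-1) 1).
  assert (HR := ibp (pj m kR (Phi 1 F)) (pj (S m) kR (Phi 1 F))
                    (pj n kR (Phi 1 G)) (pj (S n) kR (Phi 1 G)) 1 2).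
  rewrite pj_L1, pj_L2, pj_L1, pj_L2 in HL by auto.
  rewrite pj_R1, pj_R2, pj_R1, pj_R2 in HR by auto.
  rewrite !Phi_at in HL, HR by auto.
  destruct GF as [DF CF]. destruct GG as [DG CG].
  specialize (HL ltac:(lra)). specialize (HM ltac:(lra)). specialize (HR ltac:(lra)).
  specialize (HL (fun x => uL_deriv m F x (conj DF CF) Hm) (fun x => uL_deriv n G x (conj DG CG) Hn)
     (fun x => uL_cont _ F x (conj DF CF)) (fun x => uL_cont _ G x (conj DG CG))).
  specialize (HR (fun x => uR_deriv m F x (conj DF CF) Hm) (fun x => uR_deriv n G x (conj DG CG) Hn)
     (fun x => uR_cont _ F x (conj DF CF)) (fun x => uR_cont _ G x (conj DG CG))).
  specialize (HM (DF m) (DG n) (CF (S m)) (CG (S n))).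
  lra.
Qed.

Lemma Ext_ext k F G x : (forall m y, F m y = G m y) -> Ext k F x = Ext k G x.
Proof.
  intros H. assert (F = G). { apply functional_extensionality; intros m.
  apply functional_extensionality; intros y. auto. } subst; auto.
Qed.

Lemma Phi_lin p A B a c m y :
  Phi p (fun m x => a * A m x + c * B m x) m y = a * Phi p A m y + c * Phi p B m y.
Proof.
  unfold Phi. rewrite <- !sum_scal_l, <- sum_plus'. apply sum_ext; intros; ring.
Qed.

Lemma pj_lin k P Q Q1 Q2 a c x : (forall m, Q m x = a * Q1 m x + c * Q2 m x) ->
  pj k P Q x = a * pj k P Q1 x + c * pj k P Q2 x.
Proof.
  intros H. unfold pj. rewrite <- !sum_scal_l, <- sum_plus'. apply sum_ext; intros.
  rewrite H; ring.
Qed.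

Lemma Ext_lin k A B a c x :
  Ext k (fun m y => a * A m y + c * B m y) x = a * Ext k A x + c * Ext k B x.
Proof.
  unfold Ext. destruct (Rlt_dec x (-1)).
  apply pj_lin; intros; apply Phi_lin.
  destruct (Rle_dec x 1). reflexivity. apply pj_lin; intros; apply Phi_lin.
Qed.

Lemma Ext_sum k (c : nat -> R) (F : nat -> nat -> R -> R) N x :
  Ext k (fun m y => sum_f_R0 (fun i => c i * F i m y) N) x =
  sum_f_R0 (fun i => c i * Ext k (F i) x) N.
Proof.
  induction N; simpl.
  - rewrite (Ext_ext k _ (fun m y => c 0%nat * F 0%nat m y + 0 * F 0%nat m y)) by (intros; ring).
    rewrite Ext_lin. ring.
  - rewrite (Ext_ext k _ (fun m y => 1 * sum_f_R0 (fun i => c i * F i m y) N + c (S N) * F (S N) m y))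
      by (intros; ring).
    rewrite Ext_lin, IHN. ring.
Qed.

Lemma pow01 t n : 0 <= t <= 1 -> 0 <= t ^ n <= 1.
Proof.
  intros H. induction n; simpl. lra. split. apply Rmult_le_pos; lra.
  replace 1 with (1 * 1) by ring. apply Rmult_le_compat; lra.
Qed.

Lemma psi_bound m t : (m <= 4)%nat -> 0 <= t <= 1 -> Rabs (psi m t) <= 60000.
Proof.
  intros Hm Ht.
  pose proof (pow01 t 2 Ht). pose proof (pow01 t 3 Ht). pose proof (pow01 t 4 Ht).
  pose proof (pow01 t 5 Ht). pose proof (pow01 t 6 Ht). pose proof (pow01 t 7 Ht).
  apply Rabs_le. destruct m as [|[|[|[|[|]]]]]; try lia; unfold psi; split; lra.
Qed.

Lemma kR_bound m x : (m <= 4)%nat -> 1 <= x <= 2 -> Rabs (kR m x) <= 60000.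
Proof. intros; unfold kR; apply psi_bound; auto; lra. Qed.

Lemma kL_bound m x : (m <= 4)%nat -> -2 <= x <= -1 -> Rabs (kL m x) <= 60000.
Proof.
  intros; unfold kL. rewrite Rabs_mult, pow_1_abs, Rmult_1_l. apply psi_bound; auto; lra.
Qed.

Lemma bin_le6 k m : (k <= 4)%nat -> (bin k m <= 6)%nat.
Proof.
  intros Hk. destruct k as [|[|[|[|[|]]]]]; try lia;
  destruct m as [|[|[|[|[|m]]]]]; simpl; lia.
Qed.

Lemma pj_bound k P Q x A : (k <= 4)%nat -> 0 <= A ->
  (forall m, (m <= 4)%nat -> Rabs (P m x) <= A) ->
  (pj k P Q x) ^ 2 <= 5 * (6 * A) ^ 2 * sum_f_R0 (fun m => (Q m x) ^ 2) k.
Proof.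
  intros Hk HA HP. unfold pj.
  eapply Rle_trans. apply sum_sq_bound.
  assert (H5 : INR (S k) <= 5). { replace 5 with (INR 5) by (simpl; ring). apply le_INR; lia. }
  assert (Hs : sum_f_R0 (fun i => (INR (bin k i) * P (k - i)%nat x * Q i x) ^ 2) k <=
               (6 * A) ^ 2 * sum_f_R0 (fun m => Q m x ^ 2) k).
  { rewrite <- sum_scal_l. apply sum_le'. intros i Hi.
    replace ((INR (bin k i) * P (k - i)%nat x * Q i x) ^ 2) with
      ((INR (bin k i) * P (k - i)%nat x) ^ 2 * Q i x ^ 2) by ring.
    apply Rmult_le_compat_r. apply pow2_ge_0.
    rewrite <- (pow2_abs (INR (bin k i) * P (k - i)%nat x)).
    apply pow_incr. split. apply Rabs_pos.
    rewrite Rabs_mult. apply Rmult_le_compat; try apply Rabs_pos.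
    rewrite Rabs_right by (apply Rle_ge, pos_INR). replace 6 with (INR 6) by (simpl; ring).
    apply le_INR, bin_le6; auto. apply HP; lia. }
  assert (0 <= sum_f_R0 (fun i => (INR (bin k i) * P (k - i)%nat x * Q i x) ^ 2) k).
  { apply sum_nonneg; intros; apply pow2_ge_0. }
  assert (0 <= (6*A)^2 * sum_f_R0 (fun m => Q m x ^ 2) k) by lra.
  replace (5 * (6 * A) ^ 2 * sum_f_R0 (fun m => Q m x ^ 2) k) with
     (5 * ((6 * A) ^ 2 * sum_f_R0 (fun m => Q m x ^ 2) k)) by ring.
  apply Rle_trans with (INR (S k) * ((6 * A) ^ 2 * sum_f_R0 (fun m => Q m x ^ 2) k)).
  apply Rmult_le_compat_l. apply pos_INR. auto.
  apply Rmult_le_compat_r; auto.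
Qed.

Lemma coef_bound j m : (j <= 3)%nat -> (m <= 4)%nat -> Rabs (cc j * (- lam j) ^ m) <= 720.
Proof.
  intros Hj Hm. rewrite Rabs_mult, <- RPow_abs, Rabs_Ropp.
  assert (Hl : 0 <= lam j <= 2).
  { unfold lam. destruct j as [|[|[|[|]]]]; try lia; simpl; lra. }
  rewrite (Rabs_right (lam j)) by lra.
  assert (Hc : Rabs (cc j) <= 45).
  { destruct j as [|[|[|[|]]]]; try lia; unfold cc; unfold Rabs; destruct Rcase_abs; lra. }
  assert (lam j ^ m <= 16).
  { apply Rle_trans with (2 ^ m). apply pow_incr; lra.
    destruct m as [|[|[|[|[|]]]]]; try lia; simpl; lra. }
  assert (0 <= lam j ^ m) by (apply pow_le; lra).
  replace 720 with (45 * 16) by ring. apply Rmult_le_compat; auto. apply Rabs_pos.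
Qed.

Lemma Phi_bound p F m x : (m <= 4)%nat ->
  (Phi p F m x) ^ 2 <= 4 * 720 ^ 2 * sum_f_R0 (fun j => (F m (p - lam j * (x - p))) ^ 2) 3.
Proof.
  intros Hm. unfold Phi. eapply Rle_trans. apply sum_sq_bound.
  replace (INR 4) with 4 by (simpl; ring).
  rewrite Rmult_assoc. apply Rmult_le_compat_l. lra.
  rewrite <- sum_scal_l. apply sum_le'. intros i Hi.
  rewrite Rpow_mult_distr. apply Rmult_le_compat_r. apply pow2_ge_0.
  rewrite <- pow2_abs. apply pow_incr. split. apply Rabs_pos. apply coef_bound; auto.
Qed.

Definition KB : R := 5 * (6 * 60000) ^ 2 * (4 * 720 ^ 2).

Lemma KB_pos : 0 < KB.
Proof. unfold KB. lra. Qed.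

Lemma sum_le_mult (f g : nat -> R) c N : 0 <= c -> (forall i, (i <= N)%nat -> f i <= c * g i) ->
  sum_f_R0 f N <= c * sum_f_R0 g N.
Proof. intros Hc H. rewrite <- sum_scal_l. apply sum_le'; auto. Qed.

Lemma Ext_right_bound k F x : (k <= 4)%nat -> 1 < x <= 2 ->
  (Ext k F x) ^ 2 <= KB * sum_f_R0 (fun m => sum_f_R0 (fun j => (F m (1 - lam j * (x - 1))) ^ 2) 3) k.
Proof.
  intros Hk Hx. rewrite Ext_right by lra.
  eapply Rle_trans. apply (pj_bound k kR (Phi 1 F) x 60000); auto. lra.
  intros; apply kR_bound; auto; lra.
  match goal with |- _ <= KB * ?S => 
    apply Rle_trans with (5 * (6*60000)^2 * ((4*720^2) * S)); [|right; unfold KB; ring] end.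
  apply Rmult_le_compat_l. lra.
  apply sum_le_mult. lra. intros; apply Phi_bound; lia.
Qed.

Lemma Ext_left_bound k F x : (k <= 4)%nat -> -2 <= x < -1 ->
  (Ext k F x) ^ 2 <= KB * sum_f_R0 (fun m => sum_f_R0 (fun j => (F m (-1 - lam j * (x - -1))) ^ 2) 3) k.
Proof.
  intros Hk Hx. rewrite Ext_left by lra.
  eapply Rle_trans. apply (pj_bound k kL (Phi (-1) F) x 60000); auto. lra.
  intros; apply kL_bound; auto; lra.
  match goal with |- _ <= KB * ?S => 
    apply Rle_trans with (5 * (6*60000)^2 * ((4*720^2) * S)); [|right; unfold KB; ring] end.
  apply Rmult_le_compat_l. lra.
  apply sum_le_mult. lra. intros; apply Phi_bound; lia.
Qed.

Lemma lam_bounds j : (j <= 3)%nat -> 1/2 <= lam j <= 2.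
Proof. intros. unfold lam. destruct j as [|[|[|[|]]]]; try lia; simpl; lra. Qed.

Lemma CV_gen (rho : R -> R) (u v a b c d : R) : u <> 0 ->
  u * a + v = c -> u * b + v = d -> ex_RInt rho c d ->
  ex_RInt (fun t => rho (u * t + v)) a b /\
  RInt (fun t => rho (u * t + v)) a b = / u * RInt rho c d.
Proof.
  intros Hu Ha Hb Hx. subst c d.
  assert (H1 := ex_RInt_comp_lin rho u v a b Hx).
  assert (H2 := RInt_comp_lin rho u v a b Hx).
  assert (E : forall t, rho (u * t + v) = / u * scal u (rho (u * t + v))).
  { intros; unfold scal; simpl; unfold mult; simpl. field; auto. }
  split.
  - apply ex_RInt_ext with (fun t => / u * scal u (rho (u * t + v))).
    intros; symmetry; apply E. apply ex_RInt_scalR. apply H1.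
  - rewrite (RInt_ext _ (fun t => / u * scal u (rho (u * t + v)))) by (intros; apply E).
    rewrite RInt_scalR by apply H1. f_equal. exact H2.
Qed.

Lemma CV_right (rho : R -> R) j : (j <= 3)%nat -> PC rho -> (forall x, -1 <= x <= 1 -> 0 <= rho x) ->
  ex_RInt (fun t => rho (1 - lam j * (t - 1))) 1 2 /\
  RInt (fun t => rho (1 - lam j * (t - 1))) 1 2 <= 2 * RInt rho (-1) 1.
Proof.
  intros Hj HP Hpos. destruct (lam_bounds j Hj) as [L1 L2].
  assert (Hx : ex_RInt rho 1 (1 - lam j)).
  { apply ex_RInt_swap. apply PC_ex_mid; auto; lra. }
  destruct (CV_gen rho (- lam j) (1 + lam j) 1 2 1 (1 - lam j)) as [X E]; auto; try lra; try ring.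
  assert (Ef : forall t, rho (1 - lam j * (t - 1)) = rho (- lam j * t + (1 + lam j))).
  { intros; f_equal; ring. }
  split.
  - apply ex_RInt_ext with (fun t => rho (- lam j * t + (1 + lam j))).
    intros; symmetry; apply Ef. exact X.
  - rewrite (RInt_ext _ (fun t => rho (- lam j * t + (1 + lam j)))) by (intros; auto).
    rewrite E.
    assert (Hsw : RInt rho 1 (1 - lam j) = - RInt rho (1 - lam j) 1).
    { rewrite <- (opp_RInt_swap rho (1 - lam j) 1). reflexivity. apply PC_ex_mid; auto; lra. }
    rewrite Hsw.
    assert (Hc : RInt rho (-1) (1 - lam j) + RInt rho (1 - lam j) 1 = RInt rho (-1) 1).
    { apply RInt_ChaslesR; apply PC_ex_mid; auto; lra. }
    assert (P1 : 0 <= RInt rho (-1) (1 - lam j)).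
    { apply RInt_ge0'. lra. apply PC_ex_mid; auto; lra. intros; apply Hpos; lra. }
    assert (P2 : 0 <= RInt rho (1 - lam j) 1).
    { apply RInt_ge0'. lra. apply PC_ex_mid; auto; lra. intros; apply Hpos; lra. }
    replace (/ - lam j * - RInt rho (1 - lam j) 1) with (/ lam j * RInt rho (1 - lam j) 1)
      by (field; lra).
    assert (/ lam j <= 2). { rewrite <- (Rinv_inv 2). apply Rinv_le_contravar; lra. }
    assert (0 <= / lam j). { apply Rlt_le, Rinv_0_lt_compat; lra. }
    nra.
Qed.

Lemma CV_left (rho : R -> R) j : (j <= 3)%nat -> PC rho -> (forall x, -1 <= x <= 1 -> 0 <= rho x) ->
  ex_RInt (fun t => rho (-1 - lam j * (t - -1))) (-2) (-1) /\
  RInt (fun t => rho (-1 - lam j * (t - -1))) (-2) (-1) <= 2 * RInt rho (-1) 1.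
Proof.
  intros Hj HP Hpos. destruct (lam_bounds j Hj) as [L1 L2].
  assert (Hx : ex_RInt rho (-1 + lam j) (-1)).
  { apply ex_RInt_swap. apply PC_ex_mid; auto; lra. }
  destruct (CV_gen rho (- lam j) (-1 - lam j) (-2) (-1) (-1 + lam j) (-1)) as [X E]; auto; try lra; try ring.
  assert (Ef : forall t, rho (-1 - lam j * (t - -1)) = rho (- lam j * t + (-1 - lam j))).
  { intros; f_equal; ring. }
  split.
  - apply ex_RInt_ext with (fun t => rho (- lam j * t + (-1 - lam j))).
    intros; symmetry; apply Ef. exact X.
  - rewrite (RInt_ext _ (fun t => rho (- lam j * t + (-1 - lam j)))) by (intros; auto).
    rewrite E.
    assert (Hsw : RInt rho (-1 + lam j) (-1) = - RInt rho (-1) (-1 + lam j)).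
    { rewrite <- (opp_RInt_swap rho (-1) (-1 + lam j)). reflexivity. apply PC_ex_mid; auto; lra. }
    rewrite Hsw.
    assert (Hc : RInt rho (-1) (-1 + lam j) + RInt rho (-1 + lam j) 1 = RInt rho (-1) 1).
    { apply RInt_ChaslesR; apply PC_ex_mid; auto; lra. }
    assert (P1 : 0 <= RInt rho (-1 + lam j) 1).
    { apply RInt_ge0'. lra. apply PC_ex_mid; auto; lra. intros; apply Hpos; lra. }
    assert (P2 : 0 <= RInt rho (-1) (-1 + lam j)).
    { apply RInt_ge0'. lra. apply PC_ex_mid; auto; lra. intros; apply Hpos; lra. }
    replace (/ - lam j * - RInt rho (-1) (-1 + lam j)) with (/ lam j * RInt rho (-1) (-1 + lam j))
      by (field; lra).
    assert (/ lam j <= 2). { rewrite <- (Rinv_inv 2). apply Rinv_le_contravar; lra. }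
    assert (0 <= / lam j). { apply Rlt_le, Rinv_0_lt_compat; lra. }
    nra.
Qed.

Lemma GE k (phi : R -> R) (rho : nat -> R -> R) K :
  0 <= K -> PC phi -> (forall m, PC (rho m)) -> (forall m x, -1 <= x <= 1 -> 0 <= rho m x) ->
  (forall t, -1 < t < 1 -> phi t <= sum_f_R0 (fun m => rho m t) k) ->
  (forall t, 1 < t < 2 -> phi t <= K * sum_f_R0 (fun m => sum_f_R0 (fun j => rho m (1 - lam j * (t - 1))) 3) k) ->
  (forall t, -2 < t < -1 -> phi t <= K * sum_f_R0 (fun m => sum_f_R0 (fun j => rho m (-1 - lam j * (t - -1))) 3) k) ->
  RInt phi (-2) 2 <= (1 + 16 * K) * sum_f_R0 (fun m => RInt (rho m) (-1) 1) k.
Proof.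
  intros HK Pphi Prho Hpos Hmid Hright Hleft.
  rewrite RInt_split by auto.
  set (S := sum_f_R0 (fun m => RInt (rho m) (-1) 1) k).
  assert (HS : 0 <= S).
  { apply sum_nonneg; intros. apply RInt_ge0'. lra. apply PC_ex_mid; auto; lra.
    intros; apply Hpos; lra. }
  assert (M : RInt phi (-1) 1 <= S).
  { unfold S. rewrite <- RInt_sumR by (intros; apply PC_ex_mid; auto; lra).
    apply RInt_le'. lra. apply PC_ex_mid; auto; lra.
    apply ex_RInt_sumR; intros; apply PC_ex_mid; auto; lra. auto. }
  assert (R : RInt phi 1 2 <= K * (8 * S)).
  { apply Rle_trans with
      (RInt (fun t => K * sum_f_R0 (fun m => sum_f_R0 (fun j => rho m (1 - lam j * (t - 1))) 3) k) 1 2).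
    - apply RInt_le'. lra. apply PC_ex_right; auto; lra.
      apply ex_RInt_scalR. apply ex_RInt_sumR; intros m _. apply ex_RInt_sumR; intros j Hj.
      apply (CV_right (rho m) j Hj (Prho m)). intros; apply Hpos; auto.
      auto.
    - rewrite RInt_scalR.
      2:{ apply ex_RInt_sumR; intros m _. apply ex_RInt_sumR; intros j Hj.
          apply (CV_right (rho m) j Hj (Prho m)). intros; apply Hpos; auto. }
      apply Rmult_le_compat_l; auto.
      rewrite RInt_sumR.
      2:{ intros m _. apply ex_RInt_sumR; intros j Hj.
          apply (CV_right (rho m) j Hj (Prho m)). intros; apply Hpos; auto. }
      unfold S. rewrite <- sum_scal_l. apply sum_le'. intros m _.
      rewrite RInt_sumR.
      2:{ intros j Hj. apply (CV_right (rho m) j Hj (Prho m)). intros; apply Hpos; auto. }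
      apply Rle_trans with (sum_f_R0 (fun j => 2 * RInt (rho m) (-1) 1) 3).
      apply sum_le'. intros j Hj. apply (CV_right (rho m) j Hj (Prho m)). intros; apply Hpos; auto.
      simpl; lra. }
  assert (L : RInt phi (-2) (-1) <= K * (8 * S)).
  { apply Rle_trans with
      (RInt (fun t => K * sum_f_R0 (fun m => sum_f_R0 (fun j => rho m (-1 - lam j * (t - -1))) 3) k) (-2) (-1)).
    - apply RInt_le'. lra. apply PC_ex_left; auto; lra.
      apply ex_RInt_scalR. apply ex_RInt_sumR; intros m _. apply ex_RInt_sumR; intros j Hj.
      apply (CV_left (rho m) j Hj (Prho m)). intros; apply Hpos; auto.
      auto.
    - rewrite RInt_scalR.
      2:{ apply ex_RInt_sumR; intros m _. apply ex_RInt_sumR; intros j Hj.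
          apply (CV_left (rho m) j Hj (Prho m)). intros; apply Hpos; auto. }
      apply Rmult_le_compat_l; auto.
      rewrite RInt_sumR.
      2:{ intros m _. apply ex_RInt_sumR; intros j Hj.
          apply (CV_left (rho m) j Hj (Prho m)). intros; apply Hpos; auto. }
      unfold S. rewrite <- sum_scal_l. apply sum_le'. intros m _.
      rewrite RInt_sumR.
      2:{ intros j Hj. apply (CV_left (rho m) j Hj (Prho m)). intros; apply Hpos; auto. }
      apply Rle_trans with (sum_f_R0 (fun j => 2 * RInt (rho m) (-1) 1) 3).
      apply sum_le'. intros j Hj. apply (CV_left (rho m) j Hj (Prho m)). intros; apply Hpos; auto.
      simpl; lra. }
  nra.
Qed.

Definition wh (W : nat) (a : nat -> nat -> R) (k l : nat) (x y : R) : R :=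
  sum_f_R0 (fun i => Ext k (J (legendre i)) x * Ext l (J (Psi W a i)) y) W.

Lemma Sep_wh W a k l : Sep (wh W a k l).
Proof.
  unfold wh. apply (Sep_sum (fun i x y => Ext k (J (legendre i)) x * Ext l (J (Psi W a i)) y)).
  intros i. apply S_base; apply PC_Ext; apply J_good. apply legendre_poly. apply Psi_poly.
Qed.

Lemma Sep_wh2 W a k l : Sep (fun x y => wh W a k l x y ^ 2).
Proof. apply Sep_pow2, Sep_wh. Qed.

Lemma PC_inner H c d : Sep H -> box c d -> PC (fun x => RInt (fun y => H x y) c d).
Proof.
  intros S B. destruct (Sep_inner H c d S B) as [r [P E]].
  apply PC_ext with r; auto. intros; symmetry; apply E.
Qed.

Lemma sum_ge_last (f : nat -> R) N : (forall i, 0 <= f i) -> f N <= sum_f_R0 f N.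
Proof.
  intros H. destruct N; simpl. lra.
  assert (0 <= sum_f_R0 f N) by (apply sum_nonneg; auto). lra.
Qed.

Definition K1 : R := 1 + 16 * KB.

Lemma K1_pos : 1 <= K1.
Proof. unfold K1. pose proof KB_pos. lra. Qed.

Lemma yj_mid j t : (j <= 3)%nat -> 1 < t < 2 -> -1 <= 1 - lam j * (t - 1) <= 1.
Proof. intros Hj Ht. destruct (lam_bounds j Hj). split; nra. Qed.

Lemma yj_mid_l j t : (j <= 3)%nat -> -2 < t < -1 -> -1 <= -1 - lam j * (t - -1) <= 1.
Proof. intros Hj Ht. destruct (lam_bounds j Hj). split; nra. Qed.

Lemma step1 W a k l x : (l <= 4)%nat ->
  RInt (fun y => wh W a k l x y ^ 2) (-2) 2 <=
  K1 * sum_f_R0 (fun m => RInt (fun y => wh W a k m x y ^ 2) (-1) 1) l.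
Proof.
  intros Hl. unfold K1.
  set (G := fun m y => sum_f_R0 (fun i => Ext k (J (legendre i)) x * J (Psi W a i) m y) W).
  assert (EG : forall t, wh W a k l x t = Ext l G t).
  { intros t. unfold G, wh. rewrite Ext_sum. reflexivity. }
  assert (EG2 : forall m y, -1 <= y <= 1 -> G m y = wh W a k m x y).
  { intros m y Hy. unfold G, wh. apply sum_ext; intros. rewrite (Ext_mid m); auto. }
  apply (GE l (fun y => wh W a k l x y ^ 2) (fun m y => wh W a k m x y ^ 2) KB).
  - pose proof KB_pos; lra.
  - exact (Sep_PC_y _ (Sep_wh2 W a k l) x).
  - intros m. exact (Sep_PC_y _ (Sep_wh2 W a k m) x).
  - intros; apply pow2_ge_0.
  - intros t Ht. apply (sum_ge_last (fun m => wh W a k m x t ^ 2)). intros; apply pow2_ge_0.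
  - intros t Ht. rewrite EG. eapply Rle_trans. apply Ext_right_bound; auto; lra.
    right. f_equal. apply sum_ext; intros m _. apply sum_ext; intros j Hj.
    rewrite EG2; auto. apply yj_mid; auto.
  - intros t Ht. rewrite EG. eapply Rle_trans. apply Ext_left_bound; auto; lra.
    right. f_equal. apply sum_ext; intros m _. apply sum_ext; intros j Hj.
    rewrite EG2; auto. apply yj_mid_l; auto.
Qed.

Lemma B11 : box (-1) 1. Proof. left; split; reflexivity. Qed.
Lemma B22 : box (-2) 2. Proof. right; split; reflexivity. Qed.

Lemma step2 W a k m : (k <= 4)%nat ->
  I2 (-2) 2 (-1) 1 (fun x y => wh W a k m x y ^ 2) <=
  K1 * sum_f_R0 (fun m' => I2 (-1) 1 (-1) 1 (fun x y => wh W a m' m x y ^ 2)) k.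
Proof.
  intros Hk. unfold K1, I2.
  assert (Hrho : forall m' x', 0 <= RInt (fun y => wh W a m' m x' y ^ 2) (-1) 1).
  { intros. apply RInt_ge0'. lra. apply (PC_ex_box _ _ _ (Sep_PC_y _ (Sep_wh2 W a m' m) x') B11).
    intros; apply pow2_ge_0. }
  assert (Xr : forall m' x', ex_RInt (fun y => wh W a m' m x' y ^ 2) (-1) 1).
  { intros. apply (PC_ex_box _ _ _ (Sep_PC_y _ (Sep_wh2 W a m' m) x') B11). }
  assert (PW : forall t y, 1 < t < 2 -> wh W a k m t y ^ 2 <=
     KB * sum_f_R0 (fun m' => sum_f_R0 (fun j => wh W a m' m (1 - lam j * (t - 1)) y ^ 2) 3) k).
  { intros t y Ht.
    set (H := fun m' x' => sum_f_R0 (fun i => Ext m (J (Psi W a i)) y * J (legendre i) m' x') W).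
    assert (E : wh W a k m t y = Ext k H t).
    { unfold H, wh. rewrite Ext_sum. apply sum_ext; intros; rewrite Rmult_comm; reflexivity. }
    rewrite E. eapply Rle_trans. apply Ext_right_bound; auto; lra.
    right. f_equal. apply sum_ext; intros m' _. apply sum_ext; intros j Hj.
    f_equal. unfold H, wh. apply sum_ext; intros. rewrite (Ext_mid m'). ring.
    apply yj_mid; auto. }
  assert (PWl : forall t y, -2 < t < -1 -> wh W a k m t y ^ 2 <=
     KB * sum_f_R0 (fun m' => sum_f_R0 (fun j => wh W a m' m (-1 - lam j * (t - -1)) y ^ 2) 3) k).
  { intros t y Ht.
    set (H := fun m' x' => sum_f_R0 (fun i => Ext m (J (Psi W a i)) y * J (legendre i) m' x') W).
    assert (E : wh W a k m t y = Ext k H t).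
    { unfold H, wh. rewrite Ext_sum. apply sum_ext; intros; rewrite Rmult_comm; reflexivity. }
    rewrite E. eapply Rle_trans. apply Ext_left_bound; auto; lra.
    right. f_equal. apply sum_ext; intros m' _. apply sum_ext; intros j Hj.
    f_equal. unfold H, wh. apply sum_ext; intros. rewrite (Ext_mid m'). ring.
    apply yj_mid_l; auto. }
  apply (GE k (fun x => RInt (fun y => wh W a k m x y ^ 2) (-1) 1)
              (fun m' x => RInt (fun y => wh W a m' m x y ^ 2) (-1) 1) KB).
  - pose proof KB_pos; lra.
  - apply PC_inner. apply Sep_wh2. apply B11.
  - intros. apply PC_inner. apply Sep_wh2. apply B11.
  - intros; auto.
  - intros t Ht. apply (sum_ge_last (fun m' => RInt (fun y => wh W a m' m t y ^ 2) (-1) 1)). auto.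
  - intros t Ht.
    apply Rle_trans with (RInt (fun y => KB * sum_f_R0 (fun m' => sum_f_R0
        (fun j => wh W a m' m (1 - lam j * (t - 1)) y ^ 2) 3) k) (-1) 1).
    + apply RInt_le'. lra. auto.
      apply ex_RInt_scalR. apply ex_RInt_sumR; intros. apply ex_RInt_sumR; intros. auto.
      intros y Hy. apply PW; auto.
    + right. rewrite RInt_scalR. f_equal. rewrite RInt_sumR. apply sum_ext; intros.
      rewrite RInt_sumR. reflexivity. intros; auto.
      intros; apply ex_RInt_sumR; intros; auto.
      apply ex_RInt_sumR; intros. apply ex_RInt_sumR; intros. auto.
  - intros t Ht.
    apply Rle_trans with (RInt (fun y => KB * sum_f_R0 (fun m' => sum_f_R0
        (fun j => wh W a m' m (-1 - lam j * (t - -1)) y ^ 2) 3) k) (-1) 1).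
    + apply RInt_le'. lra. auto.
      apply ex_RInt_scalR. apply ex_RInt_sumR; intros. apply ex_RInt_sumR; intros. auto.
      intros y Hy. apply PWl; auto.
    + right. rewrite RInt_scalR. f_equal. rewrite RInt_sumR. apply sum_ext; intros.
      rewrite RInt_sumR. reflexivity. intros; auto.
      intros; apply ex_RInt_sumR; intros; auto.
      apply ex_RInt_sumR; intros. apply ex_RInt_sumR; intros. auto.
Qed.

Definition NS W a k l := I2 (-1) 1 (-1) 1 (fun x y => wh W a k l x y ^ 2).
Definition NE W a k l := I2 (-2) 2 (-2) 2 (fun x y => wh W a k l x y ^ 2).
Definition PE W a k l k' l' := I2 (-2) 2 (-2) 2 (fun x y => wh W a k l x y * wh W a k' l' x y).
Definition Xg (f g : R -> R) (k k' : nat) : R := RInt (fun x => Ext k (J f) x * Ext k' (J g) x) (-2) 2.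

Lemma NS_nonneg W a k l : 0 <= NS W a k l.
Proof. apply I2_nonneg. apply Sep_wh2. apply B11. apply B11. intros; apply pow2_ge_0. Qed.
Lemma NE_nonneg W a k l : 0 <= NE W a k l.
Proof. apply I2_nonneg. apply Sep_wh2. apply B22. apply B22. intros; apply pow2_ge_0. Qed.

Lemma NS_NE W a k l : NS W a k l <= NE W a k l.
Proof. apply I2_restrict. apply Sep_wh2. intros; apply pow2_ge_0. Qed.

Lemma NE_bound W a k l : (k <= 4)%nat -> (l <= 4)%nat ->
  NE W a k l <= K1 * sum_f_R0 (fun m => K1 * sum_f_R0 (fun m' => NS W a m' m) k) l.
Proof.
  intros Hk Hl. unfold NE, NS.
  apply Rle_trans with (RInt (fun x => K1 * sum_f_R0 (fun m => RInt (fun y => wh W a k m x y ^ 2) (-1) 1) l) (-2) 2).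
  - apply RInt_le'. lra. apply PC_ex_box. apply PC_inner. apply Sep_wh2. apply B22. apply B22.
    apply ex_RInt_scalR. apply ex_RInt_sumR; intros. apply PC_ex_box. apply PC_inner. apply Sep_wh2.
    apply B11. apply B22.
    intros x _. apply step1; auto.
  - rewrite RInt_scalR. apply Rmult_le_compat_l. pose proof K1_pos; lra.
    rewrite RInt_sumR. apply sum_le'. intros m Hm. apply step2; auto.
    intros. apply PC_ex_box. apply PC_inner. apply Sep_wh2. apply B11. apply B22.
    apply ex_RInt_sumR; intros. apply PC_ex_box. apply PC_inner. apply Sep_wh2.
    apply B11. apply B22.
Qed.

Lemma PC_Xg_fun (f g : R -> R) k k' : Poly f -> Poly g -> PC (fun x => Ext k (J f) x * Ext k' (J g) x).
Proof. intros. apply PC_mult; apply PC_Ext; apply J_good; auto. Qed.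

Lemma PE_expand W a k l k' l' :
  PE W a k l k' l' = sum_f_R0 (fun i => sum_f_R0 (fun i' =>
     Xg (legendre i) (legendre i') k k' * Xg (Psi W a i) (Psi W a i') l l') W) W.
Proof.
  unfold PE.
  rewrite (I2_ext _ _ _ _ _ (fun x y => sum_f_R0 (fun i => sum_f_R0 (fun i' =>
     (Ext k (J (legendre i)) x * Ext k' (J (legendre i')) x) *
     (Ext l (J (Psi W a i)) y * Ext l' (J (Psi W a i')) y)) W) W)).
  2:{ intros. unfold wh. rewrite sum_prod. apply sum_ext; intros. apply sum_ext; intros. ring. }
  rewrite I2_sum; try apply B22.
  2:{ intros i. apply (Sep_sum (fun i' x y => (Ext k (J (legendre i)) x * Ext k' (J (legendre i')) x) *
     (Ext l (J (Psi W a i)) y * Ext l' (J (Psi W a i')) y))).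
      intros i'. apply S_base; apply PC_Xg_fun; auto using legendre_poly, Psi_poly. }
  apply sum_ext; intros i _.
  rewrite I2_sum; try apply B22.
  2:{ intros i'. apply S_base; apply PC_Xg_fun; auto using legendre_poly, Psi_poly. }
  apply sum_ext; intros i' _.
  rewrite I2_base; try apply B22. reflexivity.
  apply PC_Xg_fun; auto using legendre_poly. apply PC_Xg_fun; auto using Psi_poly.
Qed.

Lemma PE_transfer W a k l k' l' k2 l2 k2' l2' e d :
  (forall i i', Xg (legendre i) (legendre i') k k' = e * Xg (legendre i) (legendre i') k2 k2') ->
  (forall i i', Xg (Psi W a i) (Psi W a i') l l' = d * Xg (Psi W a i) (Psi W a i') l2 l2') ->
  PE W a k l k' l' = e * d * PE W a k2 l2 k2' l2'.
Proof.
  intros Hx Hy. rewrite !PE_expand. rewrite <- sum_scal_l. apply sum_ext; intros.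
  rewrite <- sum_scal_l. apply sum_ext; intros. rewrite Hx, Hy. ring.
Qed.

Lemma Xg_ibp f g m n : Poly f -> Poly g -> (m <= 3)%nat -> (n <= 3)%nat ->
  Xg f g (S m) n = - Xg f g m (S n).
Proof. intros. unfold Xg. apply Ext_ibp; auto; apply J_good; auto. Qed.

Lemma X11_20 f g : Poly f -> Poly g -> Xg f g 1 1 = -1 * Xg f g 2 0.
Proof. intros. rewrite (Xg_ibp f g 1 0); auto. ring. Qed.
Lemma X11_02 f g : Poly f -> Poly g -> Xg f g 1 1 = -1 * Xg f g 0 2.
Proof. intros. rewrite (Xg_ibp f g 0 1); auto. ring. Qed.
Lemma X22_40 f g : Poly f -> Poly g -> Xg f g 2 2 = 1 * Xg f g 4 0.
Proof. intros. rewrite (Xg_ibp f g 3 0), (Xg_ibp f g 2 1); auto. ring. Qed.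
Lemma X22_04 f g : Poly f -> Poly g -> Xg f g 2 2 = 1 * Xg f g 0 4.
Proof. intros. rewrite (Xg_ibp f g 1 2), (Xg_ibp f g 0 3); auto. ring. Qed.
Lemma X33_42 f g : Poly f -> Poly g -> Xg f g 3 3 = -1 * Xg f g 4 2.
Proof. intros. rewrite (Xg_ibp f g 3 2); auto. ring. Qed.
Lemma Xid f g k k' : Xg f g k k' = 1 * Xg f g k k'.
Proof. ring. Qed.

Lemma NE_PE W a k l : NE W a k l = PE W a k l k l.
Proof. unfold NE, PE. apply I2_ext. intros; ring. Qed.

Lemma PE_amgm W a k l k' l' : 2 * Rabs (PE W a k l k' l') <= NE W a k l + NE W a k' l'.
Proof. unfold PE, NE. apply I2_amgm; auto using Sep_wh, B22. Qed.

Ltac ptac := intros; auto using X11_20, X11_02, X22_40, X22_04, X33_42, Xid, legendre_poly, Psi_poly.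

Lemma NE11 W a : NE W a 1 1 <= (NE W a 2 0 + NE W a 0 2) / 2.
Proof.
  rewrite NE_PE. rewrite (PE_transfer W a 1 1 1 1 2 0 0 2 (-1) (-1)) by ptac.
  pose proof (PE_amgm W a 2 0 0 2). unfold Rabs in *; destruct Rcase_abs; lra.
Qed.
Lemma NE21 W a : NE W a 2 1 <= (NE W a 2 0 + NE W a 2 2) / 2.
Proof.
  rewrite NE_PE. rewrite (PE_transfer W a 2 1 2 1 2 0 2 2 1 (-1)) by ptac.
  pose proof (PE_amgm W a 2 0 2 2). unfold Rabs in *; destruct Rcase_abs; lra.
Qed.
Lemma NE12 W a : NE W a 1 2 <= (NE W a 0 2 + NE W a 2 2) / 2.
Proof.
  rewrite NE_PE. rewrite (PE_transfer W a 1 2 1 2 0 2 2 2 (-1) 1) by ptac.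
  pose proof (PE_amgm W a 0 2 2 2). unfold Rabs in *; destruct Rcase_abs; lra.
Qed.
Lemma NE22 W a : NE W a 2 2 <= (NE W a 4 0 + NE W a 0 4) / 2.
Proof.
  rewrite NE_PE. rewrite (PE_transfer W a 2 2 2 2 4 0 0 4 1 1) by ptac.
  pose proof (PE_amgm W a 4 0 0 4). unfold Rabs in *; destruct Rcase_abs; lra.
Qed.
Lemma NE31 W a : NE W a 3 1 <= (NE W a 4 0 + NE W a 2 2) / 2.
Proof.
  rewrite NE_PE. rewrite (PE_transfer W a 3 1 3 1 4 0 2 2 (-1) (-1)) by ptac.
  pose proof (PE_amgm W a 4 0 2 2). unfold Rabs in *; destruct Rcase_abs; lra.
Qed.
Lemma NE13 W a : NE W a 1 3 <= (NE W a 0 4 + NE W a 2 2) / 2.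
Proof.
  rewrite NE_PE. rewrite (PE_transfer W a 1 3 1 3 0 4 2 2 (-1) (-1)) by ptac.
  pose proof (PE_amgm W a 0 4 2 2). unfold Rabs in *; destruct Rcase_abs; lra.
Qed.

Lemma intS_I2 f : intS f = I2 (-1) 1 (-1) 1 f.
Proof. reflexivity. Qed.

Lemma pderiv_wh W a k l x y : -1 <= x <= 1 -> -1 <= y <= 1 ->
  pderiv k l (upoly W a) x y = wh W a k l x y.
Proof.
  intros Hx Hy. rewrite pderiv_upoly. unfold wh. apply sum_ext; intros.
  rewrite !Ext_mid by auto. reflexivity.
Qed.

Lemma B_eq W a : Bform (upoly W a) = sum_f_R0 (fun k => sum_f_R0 (fun l => NS W a k l) (4 - k)) 4.
Proof.
  unfold Bform. rewrite intS_I2.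
  rewrite (I2_ext_open _ _ _ _ _ (fun x y => sum_f_R0 (fun k => sum_f_R0 (fun l => wh W a k l x y ^ 2) (4 - k)) 4)).
  2,3: lra.
  2:{ intros. apply sum_ext; intros. apply sum_ext; intros. rewrite pderiv_wh; auto; lra. }
  rewrite I2_sum; try apply B11.
  2:{ intros k. apply (Sep_sum (fun l x y => wh W a k l x y ^ 2)). intros; apply Sep_wh2. }
  apply sum_ext; intros k _. rewrite I2_sum; try apply B11. reflexivity.
  intros; apply Sep_wh2.
Qed.

Ltac septac := first [ apply B11 | repeat apply S_plus; apply Sep_wh2 ].

Lemma C_eq W a : Cform (upoly W a) =
  NS W a 4 0 + NS W a 0 4 + NS W a 3 0 + NS W a 0 3 + NS W a 2 0 + NS W a 0 2 +
  NS W a 1 0 + NS W a 0 1 + NS W a 0 0.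
Proof.
  unfold Cform. rewrite intS_I2.
  rewrite (I2_ext_open _ _ _ _ _ (fun x y =>
    wh W a 4 0 x y ^ 2 + wh W a 0 4 x y ^ 2 + wh W a 3 0 x y ^ 2 + wh W a 0 3 x y ^ 2 +
    wh W a 2 0 x y ^ 2 + wh W a 0 2 x y ^ 2 + wh W a 1 0 x y ^ 2 + wh W a 0 1 x y ^ 2 +
    wh W a 0 0 x y ^ 2)).
  2,3: lra.
  2:{ intros. rewrite !pderiv_wh by lra. reflexivity. }
  rewrite !I2_plus by septac. unfold NS. reflexivity.
Qed.

Lemma NE_k0 W a k : (k <= 4)%nat -> NE W a k 0 <= (K1 * K1) * sum_f_R0 (fun m => NS W a m 0) k.
Proof.
  intros Hk. eapply Rle_trans. apply NE_bound; auto. simpl. right; ring.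
Qed.

Lemma NE_0l W a l : (l <= 4)%nat -> NE W a 0 l <= (K1 * K1) * sum_f_R0 (fun m => NS W a 0 m) l.
Proof.
  intros Hl. eapply Rle_trans. apply NE_bound; auto. simpl.
  rewrite <- (sum_scal_l (K1 * K1)). rewrite <- sum_scal_l. right. apply sum_ext; intros; ring.
Qed.

Theorem theorem2p2 :
  exists M : R, 0 < M /\
    forall (W : nat) (a : nat -> nat -> R), (1 <= W)%nat ->
      / M * Bform (upoly W a) <= Cform (upoly W a) /\
      Cform (upoly W a) <= Bform (upoly W a).
Proof.
  pose proof K1_pos as HK1.
  set (K2 := K1 * K1).
  assert (HK2 : 0 <= K2) by (unfold K2; nra).
  exists (1 + 6 * K2). split. lra.
  intros W a _. rewrite B_eq, C_eq. simpl.
  set (C := NS W a 4 0 + NS W a 0 4 + NS W a 3 0 + NS W a 0 3 + NS W a 2 0 + NS W a 0 2 +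
            NS W a 1 0 + NS W a 0 1 + NS W a 0 0).
  pose proof (NS_nonneg W a 0 0). pose proof (NS_nonneg W a 1 0). pose proof (NS_nonneg W a 2 0).
  pose proof (NS_nonneg W a 3 0). pose proof (NS_nonneg W a 4 0).
  pose proof (NS_nonneg W a 0 1). pose proof (NS_nonneg W a 0 2). pose proof (NS_nonneg W a 0 3).
  pose proof (NS_nonneg W a 0 4).
  pose proof (NS_nonneg W a 1 1). pose proof (NS_nonneg W a 1 2). pose proof (NS_nonneg W a 1 3).
  pose proof (NS_nonneg W a 2 1). pose proof (NS_nonneg W a 2 2). pose proof (NS_nonneg W a 3 1).
  assert (HC : 0 <= C) by (unfold C; lra).
  assert (Hk : forall k, (k <= 4)%nat -> NE W a k 0 <= K2 * C).
  { intros k Hk. eapply Rle_trans. apply NE_k0; auto. apply Rmult_le_compat_l; auto.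
    destruct k as [|[|[|[|[|]]]]]; try lia; simpl; unfold C; lra. }
  assert (Hl : forall l, (l <= 4)%nat -> NE W a 0 l <= K2 * C).
  { intros l Hl. eapply Rle_trans. apply NE_0l; auto. apply Rmult_le_compat_l; auto.
    destruct l as [|[|[|[|[|]]]]]; try lia; simpl; unfold C; lra. }
  set (KC := K2 * C) in *.
  pose proof (Hk 2%nat ltac:(lia)). pose proof (Hk 4%nat ltac:(lia)).
  pose proof (Hl 2%nat ltac:(lia)). pose proof (Hl 4%nat ltac:(lia)).
  pose proof (NE11 W a). pose proof (NE21 W a). pose proof (NE12 W a).
  pose proof (NE22 W a). pose proof (NE31 W a). pose proof (NE13 W a).
  pose proof (NS_NE W a 1 1). pose proof (NS_NE W a 1 2). pose proof (NS_NE W a 1 3).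
  pose proof (NS_NE W a 2 1). pose proof (NS_NE W a 2 2). pose proof (NS_NE W a 3 1).
  assert (HB : NS W a 0 0 + NS W a 0 1 + NS W a 0 2 + NS W a 0 3 + NS W a 0 4 +
     (NS W a 1 0 + NS W a 1 1 + NS W a 1 2 + NS W a 1 3) +
     (NS W a 2 0 + NS W a 2 1 + NS W a 2 2) + (NS W a 3 0 + NS W a 3 1) + NS W a 4 0
     <= (1 + 6 * K2) * C).
  { replace ((1 + 6 * K2) * C) with (C + 6 * KC) by (unfold KC; ring). unfold C in *. lra. }
  split.
  - apply Rmult_le_reg_l with (1 + 6 * K2). lra.
    rewrite <- Rmult_assoc, Rinv_r, Rmult_1_l by lra. lra.
  - unfold C; lra.
Qed.
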